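(* $|(DF)_{(y,\theta)}v|\ge4|v|$ for all $(y,\theta)\in Y$ (at which $F$ is differentiable) and all $v\in\mathbb{R}^2$.
   Context: Let $\mathbb{T}=\mathbb{R}/\mathbb{Z}$, $M=[0,1]\times\mathbb{T}$. Fix $\gamma>0$. Let $u:[0,\tfrac34]\times\mathbb{T}\to(0,\infty)$ be $C^2$ with $u(0,\theta)=c_0>0$. Define $f(x,\theta)=(f_1(x,\theta),4\theta\bmod1)$, $f_1(x,\theta)=x(1+x^\gamma u(x,\theta))$ for $0\le x\le\tfrac34$, $f_1=4x-3$ for $\tfrac34<x\le1$. Standing assumptions: $x(1+x^\gamma u)\le1$ on $[0,\tfrac34]\times\mathbb{T}$; $|(Df)_{(x,\theta)}v|\ge|v|$ on $[0,\tfrac34]\times\mathbb{T}$; $f_1(\tfrac34,\theta)>\tfrac{15}{16}$; $\sup|x\,\partial u/\partial x|$, $\sup|\partial u/\partial\theta|$ sufficiently small. Let $X_i=\{(x,\theta):0\le x\le f_1(\tfrac34,\tfrac{i+\theta}{4})\}$, $i=0,\dots,3$, $X=\bigcup_iX_i$, $Y=([\tfrac34,1]\times\mathbb{T})\cap X$, $\varphi:Y\to\mathbb{Z}^+$ the first return time of $f$ to $Y$ and $F=f^\varphi:Y\to Y$ the first return map. *)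

(* Defs.v *)
From Stdlib Require Import Reals Lra.
Open Scope R_scope.

(* Points of R^2 (and of M = [0,1] x T, with theta represented in [0,1)). *)
Definition pt := (R * R)%type.

Definition norm2 (v : pt) : R := sqrt (fst v ^ 2 + snd v ^ 2).

Definition mat := ((R * R) * (R * R))%type.
Definition mapply (L : mat) (v : pt) : pt :=
  let '((a, b), (c, d)) := L in
  (a * fst v + b * snd v, c * fst v + d * snd v).

Definition psub (p q : pt) : pt := (fst p - fst q, snd p - snd q).

(* x^gamma for x >= 0 (with 0^gamma = 0, gamma > 0). *)
Definition rpow (x g : R) : R := if Rlt_dec 0 x then Rpower x g else 0.

Definition frac (t : R) : R := t - IZR (Int_part t).

(* representative of d mod 1 in [-1/2, 1/2): the chart difference on T *)
Definition twrap (d : R) : R := d - IZR (Int_part (d + / 2)).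

Definition mdiff (p q : pt) : pt := (fst p - fst q, twrap (snd p - snd q)).

Definition f1_left (gam : R) (u : R -> R -> R) (x t : R) : R :=
  x * (1 + rpow x gam * u x t).

Definition f1 (gam : R) (u : R -> R -> R) (x t : R) : R :=
  if Rle_dec x (3/4) then f1_left gam u x t else 4 * x - 3.

Definition fmap (gam : R) (u : R -> R -> R) (p : pt) : pt :=
  (f1 gam u (fst p) (snd p), frac (4 * snd p)).

Definition inM (p : pt) : Prop :=
  0 <= fst p <= 1 /\ 0 <= snd p < 1.

Definition inX (gam : R) (u : R -> R -> R) (p : pt) : Prop :=
  inM p /\ exists i : nat, (i <= 3)%nat /\
    0 <= fst p <= f1 gam u (3/4) ((INR i + snd p) / 4).

Definition inY (gam : R) (u : R -> R -> R) (p : pt) : Prop :=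
  3/4 <= fst p <= 1 /\ inX gam u p.

Definition first_return (gam : R) (u : R -> R -> R) (p : pt) (n : nat) : Prop :=
  (1 <= n)%nat /\ inY gam u (Nat.iter n (fmap gam u) p) /\
  forall k : nat, (1 <= k)%nat -> (k < n)%nat ->
    ~ inY gam u (Nat.iter k (fmap gam u) p).

(* The first return map F = f^phi : Y -> Y is differentiable at p (in the sense
   of maps of the surface M, in the natural chart (x, theta)) with derivative L:
   F is defined on a neighbourhood of p contained in Y and
   F(q) - F(p) = L (q - p) + o(|q - p|). *)
Definition F_has_derivative (gam : R) (u : R -> R -> R) (p : pt) (L : mat) : Prop :=
  exists np : nat, first_return gam u p np /\
  (exists r : R, 0 < r /\
     forall q : pt, inM q -> norm2 (mdiff q p) < r ->
       inY gam u q /\ exists n : nat, first_return gam u q n) /\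
  forall eps : R, 0 < eps -> exists del : R, 0 < del /\
    forall (q : pt) (n : nat), inM q -> norm2 (mdiff q p) < del ->
      first_return gam u q n ->
      norm2 (psub (mdiff (Nat.iter n (fmap gam u) q) (Nat.iter np (fmap gam u) p))
                  (mapply L (mdiff q p)))
        <= eps * norm2 (mdiff q p).

Definition has_derivative_within (S : pt -> Prop) (g : pt -> pt) (p : pt) (L : mat) : Prop :=
  forall eps : R, 0 < eps -> exists del : R, 0 < del /\
    forall q : pt, S q -> norm2 (psub q p) < del ->
      norm2 (psub (psub (g q) (g p)) (mapply L (psub q p))) <= eps * norm2 (psub q p).

Definition cont2 (g : R -> R -> R) : Prop :=
  forall x t eps, 0 < eps -> exists del, 0 < del /\
    forall x' t', Rabs (x' - x) < del -> Rabs (t' - t) < del ->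
      Rabs (g x' t' - g x t) < eps.

Definition is_dx (g gx : R -> R -> R) : Prop :=
  forall x t, derivable_pt_lim (fun s => g s t) x (gx x t).
Definition is_dt (g gt : R -> R -> R) : Prop :=
  forall x t, derivable_pt_lim (fun s => g x s) t (gt x t).

(* u is C^2 on R^2: continuous partial derivatives up to order 2.
   (A C^2 function on [0,3/4] x T extends to such a function; only its
   values on [0,3/4] x R matter.) *)
Definition C2 (u : R -> R -> R) : Prop :=
  exists ux ut uxx uxt utx utt : R -> R -> R,
    is_dx u ux /\ is_dt u ut /\
    is_dx ux uxx /\ is_dt ux uxt /\ is_dx ut utx /\ is_dt ut utt /\
    cont2 u /\ cont2 ux /\ cont2 ut /\
    cont2 uxx /\ cont2 uxt /\ cont2 utx /\ cont2 utt.

Definition left_strip (p : pt) : Prop := 0 <= fst p <= 3/4.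

Definition flift (gam : R) (u : R -> R -> R) (p : pt) : pt :=
  (f1_left gam u (fst p) (snd p), 4 * snd p).

(* Main.v *)
From Stdlib Require Import Reals Lra Lia ZArith.
From Coquelicot Require Import Coquelicot.
Require Import Defs.
Open Scope R_scope.

Lemma Int_part_bounds r : IZR (Int_part r) <= r < IZR (Int_part r) + 1.
Proof. destruct (base_Int_part r). lra. Qed.

Lemma Int_part_shift r k : Int_part (r + IZR k) = (Int_part r + k)%Z.
Proof. symmetry. apply Int_part_spec. rewrite plus_IZR. pose proof (Int_part_bounds r). lra. Qed.

Lemma frac_shift r k : frac (r + IZR k) = frac r.
Proof. unfold frac. rewrite Int_part_shift, plus_IZR. ring. Qed.

Lemma frac_id r : 0 <= r < 1 -> frac r = r.
Proof. intros H. unfold frac. rewrite <- (Int_part_spec r 0%Z); simpl; lra. Qed.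

Lemma frac_range r : 0 <= frac r < 1.
Proof. unfold frac. pose proof (Int_part_bounds r). lra. Qed.

Lemma frac_eq r : frac r = r + IZR (- Int_part r).
Proof. unfold frac. rewrite opp_IZR. ring. Qed.

Lemma twrap_shift d k : twrap (d + IZR k) = twrap d.
Proof. unfold twrap. replace (d + IZR k + / 2) with ((d + /2) + IZR k) by ring.
  rewrite Int_part_shift, plus_IZR. ring. Qed.

Lemma twrap_id d : -(1/2) <= d < 1/2 -> twrap d = d.
Proof. intros H. unfold twrap. rewrite <- (Int_part_spec (d + /2) 0%Z); simpl; lra. Qed.

Lemma twrap_frac a b : Rabs (a - b) < 1/2 -> twrap (frac a - frac b) = a - b.
Proof. intros H. rewrite !frac_eq.
  replace (a + IZR (- Int_part a) - (b + IZR (- Int_part b))) with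
    ((a - b) + IZR (Int_part b - Int_part a)) by (rewrite minus_IZR, !opp_IZR; ring).
  rewrite twrap_shift. apply twrap_id. apply Rabs_def2 in H. lra. Qed.

Lemma per_nat (g : R -> R) : (forall t, g (t+1) = g t) -> forall n t, g (t + INR n) = g t.
Proof. intros H n. induction n; intros t. simpl. f_equal; ring.
  rewrite S_INR. replace (t + (INR n + 1)) with ((t + INR n) + 1) by ring. rewrite H. apply IHn. Qed.

Lemma per_Z (g : R -> R) : (forall t, g (t+1) = g t) -> forall k t, g (t + IZR k) = g t.
Proof. intros H k t. destruct (Z_le_dec 0 k) as [Hk|Hk].
  - rewrite <- (Z2Nat.id k Hk). rewrite <- INR_IZR_INZ. apply per_nat; auto.
  - assert (E: (- k = Z.of_nat (Z.to_nat (- k)))%Z) by (rewrite Z2Nat.id; lia).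
    rewrite <- (per_nat g H (Z.to_nat (-k)) (t + IZR k)). f_equal.
    rewrite INR_IZR_INZ, <- E, opp_IZR. ring. Qed.

Lemma norm2_le_sum a b : norm2 (a, b) <= Rabs a + Rabs b.
Proof. unfold norm2; cbn [fst snd]. rewrite <- (sqrt_pow2 (Rabs a + Rabs b)).
  2: pose proof (Rabs_pos a); pose proof (Rabs_pos b); lra.
  apply sqrt_le_1_alt. rewrite <- (pow2_abs a), <- (pow2_abs b).
  pose proof (Rabs_pos a); pose proof (Rabs_pos b). nra. Qed.

Lemma abs_le_norm2_1 a b : Rabs a <= norm2 (a, b).
Proof. unfold norm2; cbn [fst snd]. rewrite <- sqrt_Rsqr_abs. apply sqrt_le_1_alt. unfold Rsqr. nra. Qed.

Lemma abs_le_norm2_2 a b : Rabs b <= norm2 (a, b).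
Proof. unfold norm2; cbn [fst snd]. rewrite <- sqrt_Rsqr_abs. apply sqrt_le_1_alt. unfold Rsqr. nra. Qed.

Lemma norm2_x0 a : norm2 (a, 0) = Rabs a.
Proof. unfold norm2; cbn [fst snd]. rewrite <- sqrt_Rsqr_abs. f_equal. unfold Rsqr. ring. Qed.

Lemma Rmax_lip a b c d e : Rabs (a - c) <= e -> Rabs (b - d) <= e -> Rabs (Rmax a b - Rmax c d) <= e.
Proof. intros H1 H2. apply Rabs_le_between in H1. apply Rabs_le_between in H2.
  apply Rabs_le_between. unfold Rmax. repeat destruct Rle_dec; lra. Qed.

Lemma Rmax_rot a b c d : Rmax (Rmax b c) (Rmax d a) = Rmax (Rmax a b) (Rmax c d).
Proof. unfold Rmax. repeat destruct Rle_dec; lra. Qed.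

Lemma zero_of_small z C : 0 <= C -> (forall eps, 0 < eps -> Rabs z <= eps * C) -> z = 0.
Proof. intros HC H. destruct (Req_dec z 0) as [|Hz]; auto.
  assert (Hz' : 0 < Rabs z) by (apply Rabs_pos_lt; auto).
  specialize (H (Rabs z / (2 * (C + 1))) ltac:(apply Rdiv_lt_0_compat; lra)).
  exfalso. assert (Rabs z / (2 * (C + 1)) * C < Rabs z); [|lra].
  unfold Rdiv. rewrite Rmult_assoc. rewrite <- (Rmult_1_r (Rabs z)) at 2.
  apply Rmult_lt_compat_l; auto. apply (Rmult_lt_reg_l (2 * (C+1))); [lra|].
  field_simplify; lra. Qed.

Definition Psi gam u (p : pt) : pt := (f1 gam u (fst p) (snd p), 4 * snd p).

Lemma f1_per gam u : (forall x t, u x (t + 1) = u x t) ->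
  forall x t k, f1 gam u x (t + IZR k) = f1 gam u x t.
Proof. intros Hp x t k. unfold f1, f1_left.
  rewrite (per_Z (fun s => u x s) (fun s => Hp x s) k t). reflexivity. Qed.

Lemma iter_lift gam u : (forall x t, u x (t + 1) = u x t) ->
  forall k x th, Nat.iter k (fmap gam u) (x, frac th) =
   (fst (Nat.iter k (Psi gam u) (x, th)), frac (snd (Nat.iter k (Psi gam u) (x, th)))).
Proof. intros Hp k x th. induction k. reflexivity.
  change (fmap gam u (Nat.iter k (fmap gam u) (x, frac th)) =
    (fst (Psi gam u (Nat.iter k (Psi gam u) (x, th))),
     frac (snd (Psi gam u (Nat.iter k (Psi gam u) (x, th)))))).
  rewrite IHk. destruct (Nat.iter k (Psi gam u) (x, th)) as [X T]. unfold fmap, Psi. cbn [fst snd].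
  rewrite frac_eq, f1_per by auto. f_equal.
  rewrite Rmult_plus_distr_l. replace (4 * IZR (- Int_part T)) with (IZR (4 * - Int_part T)).
  apply frac_shift. rewrite mult_IZR. reflexivity. Qed.

Lemma snd_iter gam u k x th : snd (Nat.iter k (Psi gam u) (x, th)) = 4 ^ k * th.
Proof. induction k. simpl. ring.
  change (4 * snd (Nat.iter k (Psi gam u) (x, th)) = 4 ^ S k * th). rewrite IHk. simpl. ring. Qed.

Lemma fst_iter_1 gam u k th : fst (Nat.iter k (Psi gam u) (1, th)) = 1.
Proof. induction k. reflexivity.
  change (f1 gam u (fst (Nat.iter k (Psi gam u) (1, th))) (snd (Nat.iter k (Psi gam u) (1, th))) = 1).
  rewrite IHk. unfold f1. destruct Rle_dec; lra. Qed.

Definition hh gam u t := f1_left gam u (3/4) t.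
Definition M4 gam u T := Rmax (Rmax (hh gam u (T/4)) (hh gam u ((1+T)/4)))
                              (Rmax (hh gam u ((2+T)/4)) (hh gam u ((3+T)/4))).

Lemma f1_34 gam u t : f1 gam u (3/4) t = hh gam u t.
Proof. unfold f1, hh. destruct Rle_dec; [reflexivity| lra]. Qed.

Lemma hh_per gam u : (forall x t, u x (t + 1) = u x t) -> forall t, hh gam u (t + 1) = hh gam u t.
Proof. intros Hp t. unfold hh, f1_left. rewrite Hp. reflexivity. Qed.

Lemma M4_per1 gam u : (forall x t, u x (t + 1) = u x t) -> forall T, M4 gam u (T + 1) = M4 gam u T.
Proof. intros Hp T. unfold M4.
  replace ((T+1)/4) with ((1+T)/4) by field.
  replace ((1 + (T+1))/4) with ((2+T)/4) by field.
  replace ((2 + (T+1))/4) with ((3+T)/4) by field.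
  replace ((3 + (T+1))/4) with (T/4 + 1) by field.
  rewrite hh_per by auto. apply Rmax_rot. Qed.

Lemma M4_perZ gam u : (forall x t, u x (t + 1) = u x t) -> forall k T, M4 gam u (T + IZR k) = M4 gam u T.
Proof. intros Hp k T. apply (per_Z (M4 gam u)). apply M4_per1; auto. Qed.

Lemma M4_frac gam u : (forall x t, u x (t + 1) = u x t) -> forall T, M4 gam u (frac T) = M4 gam u T.
Proof. intros Hp T. rewrite frac_eq. apply M4_perZ; auto. Qed.

Lemma M4_ge gam u T : hh gam u (T/4) <= M4 gam u T.
Proof. unfold M4. eapply Rle_trans; [|apply Rmax_l]. apply Rmax_l. Qed.

Lemma inY_char gam u : (forall x t, u x (t + 1) = u x t) -> forall X T,
  inY gam u (X, frac T) <-> (3/4 <= X <= 1 /\ X <= M4 gam u T).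
Proof. intros Hp X T. rewrite <- (M4_frac gam u Hp T). pose proof (frac_range T) as HF.
  set (s := frac T) in *. unfold inY, inX, inM. cbn [fst snd]. split.
  - intros [H1 [[H2 H3] [i [Hi [_ H4]]]]]. split; auto. rewrite f1_34 in H4. unfold M4.
    destruct i as [|[|[|[|i]]]]; try lia.
    + replace ((INR 0 + s)/4) with (s/4) in H4 by (simpl; field).
      apply Rmax_Rle; left; apply Rmax_Rle; left; auto.
    + replace ((INR 1 + s)/4) with ((1+s)/4) in H4 by (simpl; field).
      apply Rmax_Rle; left; apply Rmax_Rle; right; auto.
    + replace ((INR 2 + s)/4) with ((2+s)/4) in H4 by (simpl; field).
      apply Rmax_Rle; right; apply Rmax_Rle; left; auto.
    + replace ((INR 3 + s)/4) with ((3+s)/4) in H4 by (simpl; field).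
      apply Rmax_Rle; right; apply Rmax_Rle; right; auto.
  - intros [H1 H2]. split; auto. split; [split; lra|]. unfold M4 in H2.
    apply Rmax_Rle in H2. destruct H2 as [H2|H2]; apply Rmax_Rle in H2; destruct H2 as [H2|H2].
    + exists 0%nat. split; [lia|]. rewrite f1_34. replace ((INR 0 + s)/4) with (s/4) by (simpl; field). lra.
    + exists 1%nat. split; [lia|]. rewrite f1_34. replace ((INR 1 + s)/4) with ((1+s)/4) by (simpl; field). lra.
    + exists 2%nat. split; [lia|]. rewrite f1_34. replace ((INR 2 + s)/4) with ((2+s)/4) by (simpl; field). lra.
    + exists 3%nat. split; [lia|]. rewrite f1_34. replace ((INR 3 + s)/4) with ((3+s)/4) by (simpl; field). lra.
Qed.

Lemma lip_of_deriv (g g' : R -> R) K : (forall c, derivable_pt_lim g c (g' c)) ->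
  (forall c, Rabs (g' c) <= K) -> forall s t, Rabs (g t - g s) <= K * Rabs (t - s).
Proof. intros Hd HK.
  assert (A : forall s t, s < t -> Rabs (g t - g s) <= K * Rabs (t - s)).
  { intros s t Hst. destruct (MVT_cor2 g g' s t Hst (fun c _ => Hd c)) as [c [Hc _]].
    rewrite Hc, Rabs_mult. apply Rmult_le_compat_r; [apply Rabs_pos| apply HK]. }
  intros s t. destruct (Rtotal_order s t) as [H|[H|H]].
  - apply A; auto.
  - subst. rewrite !Rminus_diag, Rabs_R0. pose proof (HK 0). pose proof (Rabs_pos (g' 0)). lra.
  - rewrite Rabs_minus_sym, (Rabs_minus_sym t). apply A; auto. Qed.

Lemma hh_lip gam u ut K : is_dt u ut -> (forall c, Rabs (ut (3/4) c) <= K) ->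
  forall s t, Rabs (hh gam u t - hh gam u s) <= (3/4 * Rabs (rpow (3/4) gam) * K) * Rabs (t - s).
Proof. intros Hd HK s t. unfold hh, f1_left.
  replace (3 / 4 * (1 + rpow (3 / 4) gam * u (3 / 4) t) - 3 / 4 * (1 + rpow (3 / 4) gam * u (3 / 4) s))
    with ((3/4 * rpow (3/4) gam) * (u (3/4) t - u (3/4) s)) by ring.
  rewrite Rabs_mult, Rabs_mult, (Rabs_right (3/4)) by lra. rewrite !Rmult_assoc.
  apply Rmult_le_compat_l; [lra|]. apply Rmult_le_compat_l; [apply Rabs_pos|].
  apply (lip_of_deriv (fun s => u (3/4) s) (fun s => ut (3/4) s)); auto. Qed.

Lemma M4_lip gam u Lh : 0 <= Lh -> (forall s t, Rabs (hh gam u t - hh gam u s) <= Lh * Rabs (t - s)) ->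
  forall T T', Rabs (M4 gam u T' - M4 gam u T) <= Lh * Rabs (T' - T).
Proof. intros HL H T T'. pose proof (Rabs_pos (T' - T)).
  assert (E : forall c, Rabs (hh gam u ((c + T')/4) - hh gam u ((c+T)/4)) <= Lh * Rabs (T' - T)).
  { intros c. eapply Rle_trans. apply H. apply Rmult_le_compat_l; auto.
    replace ((c + T')/4 - (c+T)/4) with ((T' - T) * /4) by field. rewrite Rabs_mult.
    rewrite (Rabs_right (/4)) by lra. lra. }
  unfold M4. apply Rmax_lip; apply Rmax_lip; auto.
  replace (T'/4) with ((0 + T')/4) by field. replace (T/4) with ((0+T)/4) by field. auto. Qed.

Lemma deriv_bound f x l : derivable_pt_lim f x l -> forall eps, 0 < eps ->
  exists del, 0 < del /\ forall y, Rabs (y - x) < del -> Rabs (f y - f x - l * (y - x)) <= eps * Rabs (y - x).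
Proof. intros H eps He. destruct (H eps He) as [d Hd]. exists d. split; [apply cond_pos|].
  intros y Hy. destruct (Req_dec y x) as [->|Hne].
  - replace (f x - f x - l * (x - x)) with 0 by ring. rewrite Rminus_diag, Rabs_R0. lra.
  - assert (Hh : y - x <> 0) by lra. specialize (Hd (y - x) Hh Hy).
    replace (x + (y - x)) with y in Hd by ring.
    replace (f y - f x - l * (y - x)) with (((f y - f x) / (y - x) - l) * (y - x)) by (field; auto).
    rewrite Rabs_mult. apply Rmult_le_compat_r; [apply Rabs_pos|lra]. Qed.

Lemma D2_u u ux ut x0 t0 : is_dx u ux -> is_dt u ut -> cont2 ux ->
  differentiable_pt_lim u x0 t0 (ux x0 t0) (ut x0 t0).
Proof. intros Hx Ht Hc eps.
  assert (He2 : 0 < eps / 2) by (pose proof (cond_pos eps); lra).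
  destruct (Hc x0 t0 (eps/2) He2) as [d1 [Hd1 Hc1]].
  destruct (deriv_bound _ _ _ (Ht x0 t0) (eps/2) He2) as [d2 [Hd2 Hb2]].
  assert (Hm : 0 < Rmin d1 d2) by (apply Rmin_pos; auto).
  exists (mkposreal _ Hm). intros x t Hx' Ht'. simpl in Hx', Ht'.
  pose proof (Rmin_l d1 d2). pose proof (Rmin_r d1 d2).
  assert (A : Rabs (u x t - u x0 t - ux x0 t0 * (x - x0)) <= eps/2 * Rabs (x - x0)).
  { assert (G : forall a b, a < b -> Rabs (a - x0) < d1 -> Rabs (b - x0) < d1 ->
       Rabs (u b t - u a t - ux x0 t0 * (b - a)) <= eps / 2 * Rabs (b - a)).
    { intros a b Hab Ha Hb.
      destruct (MVT_cor2 (fun s => u s t) (fun s => ux s t) a b Hab (fun c _ => Hx c t)) as [c [Hcc Hcr]].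
      rewrite Hcc. replace (ux c t * (b - a) - ux x0 t0 * (b - a)) with ((ux c t - ux x0 t0) * (b - a)) by ring.
      rewrite Rabs_mult. apply Rmult_le_compat_r; [apply Rabs_pos|].
      apply Rlt_le, Hc1; [|lra].
      apply Rabs_def2 in Ha. apply Rabs_def2 in Hb. apply Rabs_def1; lra. }
    destruct (Rtotal_order x0 x) as [Ho|[Ho|Ho]].
    - apply G; auto. rewrite Rminus_diag, Rabs_R0. lra. lra.
    - subst. replace (u x t - u x t - ux x t0 * (x - x)) with 0 by ring. rewrite Rminus_diag, Rabs_R0. lra.
    - replace (u x t - u x0 t - ux x0 t0 * (x - x0)) with (- (u x0 t - u x t - ux x0 t0 * (x0 - x))) by ring.
      rewrite Rabs_Ropp, (Rabs_minus_sym x). apply G; auto. lra. rewrite Rminus_diag, Rabs_R0. lra. }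
  assert (B : Rabs (u x0 t - u x0 t0 - ut x0 t0 * (t - t0)) <= eps/2 * Rabs (t - t0)).
  { apply (Hb2 t). lra. }
  replace (u x t - u x0 t0 - (ux x0 t0 * (x - x0) + ut x0 t0 * (t - t0))) with
    ((u x t - u x0 t - ux x0 t0 * (x - x0)) + (u x0 t - u x0 t0 - ut x0 t0 * (t - t0))) by ring.
  eapply Rle_trans; [apply Rabs_triang|].
  pose proof (Rmax_l (Rabs (x - x0)) (Rabs (t - t0))). pose proof (Rmax_r (Rabs (x - x0)) (Rabs (t - t0))).
  pose proof (cond_pos eps). nra. Qed.

Lemma D2_mult a0 b0 : differentiable_pt_lim (fun a b => a * b) a0 b0 b0 a0.
Proof. intros eps. exists eps. intros a b Ha Hb.
  replace (a * b - a0 * b0 - (b0 * (a - a0) + a0 * (b - b0))) with ((a - a0) * (b - b0)) by ring.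
  rewrite Rabs_mult. pose proof (Rmax_l (Rabs (a - a0)) (Rabs (b - b0))).
  pose proof (Rabs_pos (a - a0)). pose proof (Rabs_pos (b - b0)). nra. Qed.

Lemma D2_lin a b c x0 t0 : differentiable_pt_lim (fun x t => a * x + b * t + c) x0 t0 a b.
Proof. intros eps. exists (mkposreal 1 Rlt_0_1). intros x t _ _.
  replace (a * x + b * t + c - (a * x0 + b * t0 + c) - (a * (x - x0) + b * (t - t0))) with 0 by ring.
  rewrite Rabs_R0. pose proof (Rmax_l (Rabs (x - x0)) (Rabs (t - t0))). pose proof (Rabs_pos (x - x0)).
  pose proof (cond_pos eps). nra. Qed.

Lemma dpl_eq f x y a b a' b' : differentiable_pt_lim f x y a b -> a = a' -> b = b' ->
  differentiable_pt_lim f x y a' b'.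
Proof. intros H -> ->. exact H. Qed.

Definition Dvec (g : pt -> pt) (x y : R) (L : mat) : Prop :=
  differentiable_pt_lim (fun a b => fst (g (a, b))) x y (fst (fst L)) (snd (fst L)) /\
  differentiable_pt_lim (fun a b => snd (g (a, b))) x y (fst (snd L)) (snd (snd L)).

Definition matmul (A G : mat) : mat :=
  ((fst (fst A) * fst (fst G) + snd (fst A) * fst (snd G), fst (fst A) * snd (fst G) + snd (fst A) * snd (snd G)),
   (fst (snd A) * fst (fst G) + snd (snd A) * fst (snd G), fst (snd A) * snd (fst G) + snd (snd A) * snd (snd G))).

Lemma Dvec_comp (f g : pt -> pt) x y G A : Dvec g x y G ->
  Dvec f (fst (g (x, y))) (snd (g (x, y))) A -> Dvec (fun q => f (g q)) x y (matmul A G).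
Proof. intros [Hg1 Hg2] [Hf1 Hf2]. split.
  - eapply differentiable_pt_lim_ext;
    [| exact (differentiable_pt_lim_comp (fun a b => fst (f (a, b))) (fun a b => fst (g (a, b)))
             (fun a b => snd (g (a, b))) x y _ _ _ _ _ _ Hf1 Hg1 Hg2)].
    exists (mkposreal 1 Rlt_0_1). intros a b _ _. cbv beta. rewrite <- surjective_pairing. reflexivity.
  - eapply differentiable_pt_lim_ext;
    [| exact (differentiable_pt_lim_comp (fun a b => snd (f (a, b))) (fun a b => fst (g (a, b)))
             (fun a b => snd (g (a, b))) x y _ _ _ _ _ _ Hf2 Hg1 Hg2)].
    exists (mkposreal 1 Rlt_0_1). intros a b _ _. cbv beta. rewrite <- surjective_pairing. reflexivity.
Qed.

Definition Imat : mat := ((1, 0), (0, 1)).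

Fixpoint Gk (Af : pt -> mat) (Ps : pt -> pt) (p : pt) (k : nat) : mat :=
  match k with
  | O => Imat
  | S k => matmul (Af (Nat.iter k Ps p)) (Gk Af Ps p k)
  end.

Lemma Dvec_id x y : Dvec (fun q => q) x y Imat.
Proof. split; cbn [fst snd Imat].
  - eapply differentiable_pt_lim_ext; [|apply (D2_lin 1 0 0)].
    exists (mkposreal 1 Rlt_0_1). intros a b _ _. simpl. ring.
  - eapply differentiable_pt_lim_ext; [|apply (D2_lin 0 1 0)].
    exists (mkposreal 1 Rlt_0_1). intros a b _ _. simpl. ring. Qed.

Lemma Dvec_iter (Af : pt -> mat) (Ps : pt -> pt) x y n :
  (forall k, (k < n)%nat -> Dvec Ps (fst (Nat.iter k Ps (x, y))) (snd (Nat.iter k Ps (x, y))) (Af (Nat.iter k Ps (x, y)))) ->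
  forall k, (k <= n)%nat -> Dvec (Nat.iter k Ps) x y (Gk Af Ps (x, y) k).
Proof. intros H k. induction k; intros Hk.
  - apply Dvec_id.
  - apply (Dvec_comp Ps (Nat.iter k Ps) x y). apply IHk; lia. apply H; lia. Qed.

Definition a_of gam (u ux : R -> R -> R) (x t : R) :=
  1 + u x t * (Rpower x gam + x * (gam * Rpower x (gam - 1))) + x * Rpower x gam * ux x t.
Definition b_of gam (u ut : R -> R -> R) (x t : R) :=
  x * Rpower x gam * ut x t.

Definition A_of gam u ux ut (q : pt) : mat :=
  if Rlt_dec (fst q) (3/4) then ((a_of gam u ux (fst q) (snd q), b_of gam u ut (fst q) (snd q)), (0, 4))
  else ((4, 0), (0, 4)).

Lemma D2_phi gam u ux ut x0 t0 : 0 < x0 -> is_dx u ux -> is_dt u ut -> cont2 ux ->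
  differentiable_pt_lim (fun x t => 1 * (1 * x + 0 * t + 0) + 1 * ((x * Rpower x gam) * u x t) + 0) x0 t0
    (a_of gam u ux x0 t0) (b_of gam u ut x0 t0).
Proof. intros Hx0 Hdx Hdt Hc.
  assert (HW : derivable_pt_lim (fun x => x * Rpower x gam) x0 (1 * Rpower x0 gam + x0 * (gam * Rpower x0 (gam - 1)))).
  { apply (derivable_pt_lim_mult id (fun x => Rpower x gam)). apply derivable_pt_lim_id. apply derivable_pt_lim_power; lra. }
  pose proof (differentiable_pt_lim_proj1_0 _ x0 t0 _ HW) as HW2.
  pose proof (D2_u u ux ut x0 t0 Hdx Hdt Hc) as Hu.
  pose proof (differentiable_pt_lim_comp (fun a b => a * b) (fun x _ => x * Rpower x gam) u x0 t0 _ _ _ _ _ _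
     (D2_mult _ _) HW2 Hu) as Hm.
  pose proof (differentiable_pt_lim_comp (fun a b => 1 * a + 1 * b + 0) (fun x t => 1 * x + 0 * t + 0)
     (fun x t => (x * Rpower x gam) * u x t) x0 t0 _ _ _ _ _ _ (D2_lin _ _ _ _ _) (D2_lin _ _ _ _ _) Hm) as Hs.
  eapply dpl_eq; [exact Hs| unfold a_of; ring | unfold b_of; ring]. Qed.

Lemma Dvec_flift_left gam u ux ut x0 t0 : 0 < x0 < 3/4 -> is_dx u ux -> is_dt u ut -> cont2 ux ->
  Dvec (flift gam u) x0 t0 (A_of gam u ux ut (x0, t0)).
Proof. intros Hx Hdx Hdt Hc. unfold A_of; cbn [fst snd]. destruct (Rlt_dec x0 (3/4)) as [_|]; [|lra].
  split; cbn [fst snd].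
  - eapply differentiable_pt_lim_ext; [|apply (D2_phi gam u ux ut x0 t0); auto; lra].
    assert (Hp : 0 < x0) by lra. exists (mkposreal x0 Hp). intros a b Ha _. simpl in Ha.
    unfold flift, f1_left, rpow; cbn [fst snd]. apply Rabs_def2 in Ha.
    destruct (Rlt_dec 0 a); [ring| lra].
  - eapply differentiable_pt_lim_ext; [|apply (D2_lin 0 4 0)].
    exists (mkposreal 1 Rlt_0_1). intros a b _ _. unfold flift; cbn [fst snd]. ring. Qed.

Lemma Dvec_Psi_left gam u ux ut x0 t0 : 0 < x0 < 3/4 -> is_dx u ux -> is_dt u ut -> cont2 ux ->
  Dvec (Psi gam u) x0 t0 (A_of gam u ux ut (x0, t0)).
Proof. intros Hx Hdx Hdt Hc. destruct (Dvec_flift_left gam u ux ut x0 t0 Hx Hdx Hdt Hc) as [H1 H2].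
  split.
  - eapply differentiable_pt_lim_ext; [|exact H1].
    assert (Hp : 0 < Rmin x0 (3/4 - x0)) by (apply Rmin_pos; lra). exists (mkposreal _ Hp).
    intros a b Ha _. simpl in Ha. pose proof (Rmin_l x0 (3/4 - x0)). pose proof (Rmin_r x0 (3/4 - x0)).
    apply Rabs_def2 in Ha. unfold flift, Psi, f1; cbn [fst snd]. destruct Rle_dec; [reflexivity|lra].
  - eapply differentiable_pt_lim_ext; [|exact H2].
    exists (mkposreal 1 Rlt_0_1). intros a b _ _. reflexivity. Qed.

Lemma Dvec_Psi_right gam u ux ut x0 t0 : 3/4 < x0 -> Dvec (Psi gam u) x0 t0 (A_of gam u ux ut (x0, t0)).
Proof. intros Hx. unfold A_of; cbn [fst snd]. destruct (Rlt_dec x0 (3/4)) as [|_]; [lra|].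
  split; cbn [fst snd].
  - eapply differentiable_pt_lim_ext; [|apply (D2_lin 4 0 (-3))].
    assert (Hp : 0 < x0 - 3/4) by lra. exists (mkposreal _ Hp). intros a b Ha _. simpl in Ha.
    apply Rabs_def2 in Ha. unfold Psi, f1; cbn [fst snd]. destruct Rle_dec; [lra|ring].
  - eapply differentiable_pt_lim_ext; [|apply (D2_lin 0 4 0)].
    exists (mkposreal 1 Rlt_0_1). intros a b _ _. unfold Psi; cbn [fst snd]. ring. Qed.

Lemma Rmax_le_norm2 a b : Rmax (Rabs a) (Rabs b) <= norm2 (a, b).
Proof. unfold Rmax. destruct Rle_dec; [apply abs_le_norm2_2|apply abs_le_norm2_1]. Qed.

Lemma hdw_of_Dvec (S : pt -> Prop) g x y L : Dvec g x y L -> has_derivative_within S g (x, y) L.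
Proof. destruct L as [[a b] [c d]]. intros [H1 H2] eps He. cbn [fst snd] in H1, H2.
  assert (He2 : 0 < eps / 2) by lra.
  destruct (H1 (mkposreal _ He2)) as [d1 Hd1]. destruct (H2 (mkposreal _ He2)) as [d2 Hd2].
  exists (Rmin d1 d2). split; [apply Rmin_pos; apply cond_pos|].
  intros [q1 q2] _ Hq. unfold psub, mapply in *; cbn [fst snd] in *.
  pose proof (Rmin_l d1 d2). pose proof (Rmin_r d1 d2).
  pose proof (abs_le_norm2_1 (q1 - x) (q2 - y)). pose proof (abs_le_norm2_2 (q1 - x) (q2 - y)).
  pose proof (Rmax_le_norm2 (q1 - x) (q2 - y)).
  specialize (Hd1 q1 q2 ltac:(simpl; lra) ltac:(simpl; lra)). specialize (Hd2 q1 q2 ltac:(simpl; lra) ltac:(simpl; lra)).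
  simpl in Hd1, Hd2.
  eapply Rle_trans; [apply norm2_le_sum|]. nra. Qed.

Lemma Rpower_le1 x g : 0 < x <= 1 -> 0 <= g -> Rpower x g <= 1.
Proof. intros Hx Hg. assert (E : Rpower 1 g = 1) by (unfold Rpower; rewrite ln_1, Rmult_0_r; apply exp_0).
  rewrite <- E. apply Rle_Rpower_l; lra. Qed.

Lemma Rpower_pos x g : 0 < Rpower x g.
Proof. unfold Rpower. apply exp_pos. Qed.

Lemma a_of_pos gam u ux x t : 0 < gam -> 0 < x < 3/4 -> 0 < u x t -> Rabs (x * ux x t) <= 1/2 ->
  0 < a_of gam u ux x t.
Proof. intros Hg Hx Hu Hb. unfold a_of.
  pose proof (Rpower_pos x gam). pose proof (Rpower_pos x (gam - 1)).
  pose proof (Rpower_le1 x gam ltac:(lra) ltac:(lra)).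
  apply Rabs_le_between in Hb.
  assert (0 < u x t * (Rpower x gam + x * (gam * Rpower x (gam - 1)))).
  { apply Rmult_lt_0_compat; auto. assert (0 < x * (gam * Rpower x (gam - 1))); [|lra].
    apply Rmult_lt_0_compat; [lra|]. apply Rmult_lt_0_compat; lra. }
  replace (x * Rpower x gam * ux x t) with (Rpower x gam * (x * ux x t)) by ring. nra. Qed.

Definition Ev (P : R -> Prop) := exists h0, 0 < h0 /\ forall h, 0 < h < h0 -> P h.

Lemma Ev_and P Q : Ev P -> Ev Q -> Ev (fun h => P h /\ Q h).
Proof. intros [a [Ha HP]] [b [Hb HQ]]. exists (Rmin a b). split; [apply Rmin_pos; auto|].
  intros h Hh. pose proof (Rmin_l a b). pose proof (Rmin_r a b). split; [apply HP|apply HQ]; lra. Qed.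

Lemma Ev_mono (P Q : R -> Prop) : Ev P -> (forall h, 0 < h -> P h -> Q h) -> Ev Q.
Proof. intros [a [Ha HP]] H. exists a. split; auto. intros h Hh. apply H; [lra|]. apply HP; auto. Qed.

Lemma Ev_lt c : 0 < c -> Ev (fun h => h < c).
Proof. intros Hc. exists c. split; auto. intros h Hh. lra. Qed.

Lemma Ev_get P : Ev P -> exists h, 0 < h /\ P h.
Proof. intros [a [Ha HP]]. exists (a/2). split; [lra|]. apply HP. lra. Qed.

Lemma Ev_forall (P : nat -> R -> Prop) n : (forall k, (k < n)%nat -> Ev (P k)) ->
  Ev (fun h => forall k, (k < n)%nat -> P k h).
Proof. induction n; intros H.
  - exists 1. split; [lra|]. intros h _ k Hk. lia.
  - destruct (Ev_and _ _ (IHn (fun k Hk => H k ltac:(lia))) (H n ltac:(lia))) as [a [Ha Hp]].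
    exists a. split; auto. intros h Hh k Hk. destruct (Hp h Hh) as [H1 H2].
    destruct (Nat.eq_dec k n) as [->|Hne]; auto. apply H1. lia. Qed.

Lemma ray_first g x y a b s d : differentiable_pt_lim g x y a b -> forall eps, 0 < eps ->
  Ev (fun h => Rabs (g (x + h * s) (y + h * d) - g x y - h * (a * s + b * d)) <= eps * h).
Proof. intros H eps He. set (N := Rabs s + Rabs d + 1).
  assert (HN : 0 < N) by (unfold N; pose proof (Rabs_pos s); pose proof (Rabs_pos d); lra).
  assert (He' : 0 < eps / N) by (apply Rdiv_lt_0_compat; auto).
  destruct (H (mkposreal _ He')) as [del Hdel].
  exists (del / N). split; [apply Rdiv_lt_0_compat; [apply cond_pos|auto]|].
  intros h [Hh0 Hh1].
  assert (hN : h * N < del) by (apply (Rmult_lt_reg_r (/N)); [apply Rinv_0_lt_compat; auto|];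
     field_simplify; [|lra|lra]; unfold Rdiv in Hh1; lra).
  assert (A1 : Rabs (x + h * s - x) = h * Rabs s) by (replace (x + h*s - x) with (h * s) by ring;
     rewrite Rabs_mult, Rabs_right by lra; ring).
  assert (A2 : Rabs (y + h * d - y) = h * Rabs d) by (replace (y + h*d - y) with (h * d) by ring;
     rewrite Rabs_mult, Rabs_right by lra; ring).
  pose proof (Rabs_pos s); pose proof (Rabs_pos d).
  specialize (Hdel (x + h * s) (y + h * d)). simpl in Hdel. rewrite A1, A2 in Hdel.
  assert (h * Rabs s < del) by (unfold N in hN; nra).
  assert (h * Rabs d < del) by (unfold N in hN; nra).
  specialize (Hdel H2 H3).
  replace (a * (x + h * s - x) + b * (y + h * d - y)) with (h * (a * s + b * d)) in Hdel by ring.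
  eapply Rle_trans; [exact Hdel|].
  assert (Rmax (h * Rabs s) (h * Rabs d) <= h * N).
  { unfold Rmax; destruct Rle_dec; unfold N; nra. }
  replace (eps * h) with (eps / N * (h * N)) by (field; lra).
  apply Rmult_le_compat_l; lra. Qed.

Lemma ray_cont g x y a b s d : differentiable_pt_lim g x y a b -> forall eta, 0 < eta ->
  Ev (fun h => Rabs (g (x + h * s) (y + h * d) - g x y) < eta).
Proof. intros H eta He. set (c := Rabs (a * s + b * d)).
  assert (Hc : 0 <= c) by apply Rabs_pos.
  eapply Ev_mono. apply Ev_and. apply (ray_first g x y a b s d H 1 Rlt_0_1).
  apply (Ev_lt (eta / (c + 1))). apply Rdiv_lt_0_compat; lra.
  intros h Hh [H1 H2]. simpl in H1.
  assert (h * (c + 1) < eta) by (apply (Rmult_lt_reg_r (/(c+1))); [apply Rinv_0_lt_compat; lra|];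
     field_simplify; [|lra|lra]; unfold Rdiv in H2; lra).
  replace (g (x + h * s) (y + h * d) - g x y) with
    ((g (x + h * s) (y + h * d) - g x y - h * (a * s + b * d)) + h * (a * s + b * d)) by ring.
  eapply Rle_lt_trans; [apply Rabs_triang|]. rewrite Rabs_mult, (Rabs_right h) by lra.
  fold c. nra. Qed.

Lemma div_bound h z K : 0 < h -> h * Rabs z <= h * K -> Rabs z <= K.
Proof. intros Hh H. apply (Rmult_le_reg_l h); auto. Qed.

Lemma lt_div_mul h K c : 0 < K -> h < c / K -> h * K < c.
Proof. intros HK H. apply (Rmult_lt_compat_r K) in H; auto. replace (c / K * K) with c in H by (field; lra). exact H. Qed.

Lemma ray_eq gam u (L : mat) n xp tp (G : mat) s d :
  (forall x t, u x (t + 1) = u x t) -> 0 <= tp < 1 ->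
  (forall eps, 0 < eps -> exists del, 0 < del /\
    forall (q : pt) (m : nat), inM q -> norm2 (mdiff q (xp, tp)) < del ->
      first_return gam u q m ->
      norm2 (psub (mdiff (Nat.iter m (fmap gam u) q) (Nat.iter n (fmap gam u) (xp, tp)))
                  (mapply L (mdiff q (xp, tp)))) <= eps * norm2 (mdiff q (xp, tp))) ->
  Dvec (Nat.iter n (Psi gam u)) xp tp G ->
  Ev (fun h => inM (xp + h * s, frac (tp + h * d)) /\ first_return gam u (xp + h * s, frac (tp + h * d)) n) ->
  mapply L (s, d) = mapply G (s, d).
Proof. intros Hp Htp HFd [HG1 HG2] Hray.
  destruct L as [[l11 l12] [l21 l22]]. destruct G as [[g11 g12] [g21 g22]].
  cbn [fst snd] in HG1, HG2. unfold mapply; cbn [fst snd].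
  set (C := Rabs s + Rabs d + 1).
  assert (HC : 1 <= C) by (unfold C; pose proof (Rabs_pos s); pose proof (Rabs_pos d); lra).
  assert (Main : forall eps, 0 < eps ->
     Rabs ((l11 * s + l12 * d) - (g11 * s + g12 * d)) <= eps * (2 * C) /\
     Rabs ((l21 * s + l22 * d) - (g21 * s + g22 * d)) <= eps * (2 * C)).
  { intros eps He. destruct (HFd eps He) as [del [Hdel HF]].
    pose proof (ray_first _ _ _ _ _ s d HG1 eps He) as R1.
    pose proof (ray_first _ _ _ _ _ s d HG2 eps He) as R2.
    assert (Hw : 0 < 1 / (2 * (4 ^ n + 1) * (Rabs d + 1))).
    { apply Rdiv_lt_0_compat; [lra|]. pose proof (pow_lt 4 n ltac:(lra)). pose proof (Rabs_pos d).
      apply Rmult_lt_0_compat; lra. }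
    destruct (Ev_get _ (Ev_and _ _ Hray (Ev_and _ _ R1 (Ev_and _ _ R2 (Ev_and _ _
       (Ev_lt (del / C) ltac:(apply Rdiv_lt_0_compat; lra)) (Ev_lt _ Hw))))))
      as [h [Hh [[HM HR] [E1 [E2 [Hh1 Hh2]]]]]].
    cbv beta in E1, E2.
    pose proof (Rabs_pos d) as Had. pose proof (Rabs_pos s) as Has. pose proof (pow_lt 4 n ltac:(lra)) as H4.
    assert (Hhd : Rabs (h * d) < 1/2).
    { rewrite Rabs_mult, Rabs_right by lra.
      assert (h * (2 * (4 ^ n + 1) * (Rabs d + 1)) < 1).
      { apply lt_div_mul; auto. apply Rmult_lt_0_compat; lra. }
      assert (h * Rabs d * 2 <= h * (2 * (4 ^ n + 1) * (Rabs d + 1))); [|lra].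
      assert (0 <= h * Rabs d) by nra.
      replace (h * (2 * (4 ^ n + 1) * (Rabs d + 1))) with (h * Rabs d * 2 + (h * Rabs d * 2 * 4^n + h * 2 * (4^n+1))) by ring.
      assert (0 <= h * Rabs d * 2 * 4^n) by nra. assert (0 <= h * 2 * (4^n+1)) by nra. lra. }
    assert (Hhd4 : Rabs (4 ^ n * (h * d)) < 1/2).
    { rewrite !Rabs_mult, (Rabs_right h), (Rabs_right (4^n)) by lra.
      assert (h * (2 * (4 ^ n + 1) * (Rabs d + 1)) < 1).
      { apply lt_div_mul; auto. apply Rmult_lt_0_compat; lra. }
      assert (4 ^ n * (h * Rabs d) * 2 <= h * (2 * (4 ^ n + 1) * (Rabs d + 1))); [|lra].
      replace (h * (2 * (4 ^ n + 1) * (Rabs d + 1))) with (4 ^ n * (h * Rabs d) * 2 + (h * Rabs d * 2 + h * 2 * (4^n+1))) by ring.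
      assert (0 <= h * Rabs d) by nra. assert (0 <= h * 2 * (4^n+1)) by nra. lra. }
    assert (Hmq : mdiff (xp + h * s, frac (tp + h * d)) (xp, tp) = (h * s, h * d)).
    { unfold mdiff; cbn [fst snd]. f_equal. ring. rewrite <- (frac_id tp Htp) at 2.
      rewrite twrap_frac. ring. replace (tp + h * d - tp) with (h * d) by ring. exact Hhd. }
    assert (Hnq : norm2 (h * s, h * d) <= h * C).
    { eapply Rle_trans; [apply norm2_le_sum|]. rewrite !Rabs_mult, Rabs_right by lra. unfold C. nra. }
    assert (Hnd : norm2 (h * s, h * d) < del).
    { assert (h * C < del); [|lra]. apply lt_div_mul; auto; lra. }
    specialize (HF _ n HM ltac:(rewrite Hmq; exact Hnd) HR). rewrite Hmq in HF.
    assert (EP : Nat.iter n (fmap gam u) (xp, tp) = (fst (Nat.iter n (Psi gam u) (xp, tp)), frac (snd (Nat.iter n (Psi gam u) (xp, tp))))).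
    { rewrite <- (iter_lift gam u Hp n xp tp), (frac_id tp Htp). reflexivity. }
    rewrite EP, (iter_lift gam u Hp n) in HF.
    unfold mdiff, psub, mapply in HF; cbn [fst snd] in HF.
    rewrite twrap_frac in HF.
    2:{ rewrite !snd_iter. replace (4 ^ n * (tp + h * d) - 4 ^ n * tp) with (4 ^ n * (h * d)) by ring. exact Hhd4. }
    set (DX := fst (Nat.iter n (Psi gam u) (xp + h * s, tp + h * d)) - fst (Nat.iter n (Psi gam u) (xp, tp))) in *.
    set (DT := snd (Nat.iter n (Psi gam u) (xp + h * s, tp + h * d)) - snd (Nat.iter n (Psi gam u) (xp, tp))) in *.
    pose proof (abs_le_norm2_1 (DX - (l11 * (h * s) + l12 * (h * d))) (DT - (l21 * (h * s) + l22 * (h * d)))) as F1.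
    pose proof (abs_le_norm2_2 (DX - (l11 * (h * s) + l12 * (h * d))) (DT - (l21 * (h * s) + l22 * (h * d)))) as F2.
    assert (HB : eps * norm2 (h * s, h * d) <= eps * (h * C)) by (apply Rmult_le_compat_l; lra).
    assert (eps * h <= eps * (h * C)) by (apply Rmult_le_compat_l; nra).
    split; apply (div_bound h); auto; rewrite <- (Rabs_right h) at 1 by lra; rewrite <- Rabs_mult.
    - replace (h * (l11 * s + l12 * d - (g11 * s + g12 * d))) with
        (- (DX - (l11 * (h * s) + l12 * (h * d))) + (DX - h * (g11 * s + g12 * d))) by (unfold DX; ring).
      eapply Rle_trans; [apply Rabs_triang|]. rewrite Rabs_Ropp. replace (h * (eps * (2*C))) with (eps*(h*C) + eps*(h*C)) by ring. lra.
    - replace (h * (l21 * s + l22 * d - (g21 * s + g22 * d))) with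
        (- (DT - (l21 * (h * s) + l22 * (h * d))) + (DT - h * (g21 * s + g22 * d))) by (unfold DT; ring).
      eapply Rle_trans; [apply Rabs_triang|]. rewrite Rabs_Ropp. replace (h * (eps * (2*C))) with (eps*(h*C) + eps*(h*C)) by ring. lra. }
  f_equal; apply Rminus_diag_uniq; apply (zero_of_small _ (2 * C)); try lra;
    intros eps He; destruct (Main eps He); auto. Qed.

Lemma norm2_scale c a b : norm2 (c * a, c * b) = Rabs c * norm2 (a, b).
Proof. unfold norm2; cbn [fst snd]. rewrite <- sqrt_Rsqr_abs, <- sqrt_mult_alt.
  f_equal. unfold Rsqr. ring. apply Rle_0_sqr. Qed.

Lemma mapply_matmul A G w : mapply (matmul A G) w = mapply A (mapply G w).
Proof. destruct A as [[a b] [c d]]. destruct G as [[e f] [g h]]. destruct w as [w1 w2].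
  unfold mapply, matmul; cbn [fst snd]. f_equal; ring. Qed.

Lemma mapply_I w : mapply Imat w = w.
Proof. destruct w as [a b]. unfold mapply, Imat; cbn [fst snd]. f_equal; ring. Qed.

Lemma mat_eq_dirs (L G : mat) s d : s <> 0 -> d <> 0 -> mapply L (s, 0) = mapply G (s, 0) ->
  mapply L (s, d) = mapply G (s, d) -> forall w, mapply L w = mapply G w.
Proof. destruct L as [[a b] [c e]]. destruct G as [[a' b'] [c' e']]. unfold mapply; cbn [fst snd].
  intros Hs Hd H1 H2 [w1 w2]. injection H1; intros H1b H1a. injection H2; intros H2b H2a.
  assert (a = a') by (apply (Rmult_eq_reg_r s); auto; lra).
  assert (c = c') by (apply (Rmult_eq_reg_r s); auto; lra). subst a' c'.
  assert (b = b') by (apply (Rmult_eq_reg_r d); auto; lra).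
  assert (e = e') by (apply (Rmult_eq_reg_r d); auto; lra). subst. reflexivity. Qed.

Lemma M4_le1 gam u : (forall x t, 0 <= x <= 3/4 -> f1_left gam u x t <= 1) -> forall T, M4 gam u T <= 1.
Proof. intros H T. unfold M4, hh.
  pose proof (H (3/4) (T/4) ltac:(lra)). pose proof (H (3/4) ((1+T)/4) ltac:(lra)).
  pose proof (H (3/4) ((2+T)/4) ltac:(lra)). pose proof (H (3/4) ((3+T)/4) ltac:(lra)).
  unfold Rmax. repeat destruct Rle_dec; lra. Qed.

Theorem proposition2p1 :
  forall gam : R, 0 < gam ->
  exists small : R, 0 < small /\
  forall (u : R -> R -> R) (c0 : R),
    C2 u ->
    (forall x t, u x (t + 1) = u x t) ->
    (forall x t, 0 <= x <= 3/4 -> 0 < u x t) ->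
    0 < c0 ->
    (forall t, u 0 t = c0) ->
    (forall x t, 0 <= x <= 3/4 -> f1_left gam u x t <= 1) ->
    (forall (p : pt) (L : mat), left_strip p ->
       has_derivative_within left_strip (flift gam u) p L ->
       forall v : pt, norm2 v <= norm2 (mapply L v)) ->
    (forall t, f1_left gam u (3/4) t > 15/16) ->
    (forall x t d, 0 <= x <= 3/4 ->
       derivable_pt_lim (fun s => u s t) x d -> Rabs (x * d) <= small) ->
    (forall x t d, 0 <= x <= 3/4 ->
       derivable_pt_lim (fun s => u x s) t d -> Rabs d <= small) ->
    forall (p : pt) (L : mat),
      inY gam u p -> F_has_derivative gam u p L ->
      forall v : pt, 4 * norm2 v <= norm2 (mapply L v).
Proof.
  intros gam Hgam. exists (1/2). split; [lra|].
  intros u c0 HC2 Hper Hpos Hc0 Hu0 Hle1 Hexp H15 Hsx Hst p L HYp HF v.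
  destruct HC2 as [ux [ut [uxx [uxt [utx [utt [Hdx [Hdt [_ [_ [_ [_ [Hcu [Hcux [Hcut _]]]]]]]]]]]]]]].
  destruct p as [xp tp].
  destruct HF as [n [Hfr [[r [Hr Hnb]] HFd]]].
  assert (HYp' := HYp). unfold inY, inX, inM in HYp'; cbn [fst snd] in HYp'.
  destruct HYp' as [Hxp1 [[_ Htp] _]].
  assert (Hxp : 3/4 < xp).
  { destruct (Req_dec xp (3/4)) as [E|E]; [|lra]. exfalso.
    set (e := Rmin r (1/2) / 2).
    assert (He : 0 < e /\ e < r /\ e <= 1/4).
    { unfold e. pose proof (Rmin_l r (1/2)). pose proof (Rmin_r r (1/2)).
      pose proof (Rmin_pos r (1/2) Hr ltac:(lra)). lra. }
    destruct (Hnb (3/4 - e, tp)) as [HYq _].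
    - unfold inM; cbn [fst snd]. lra.
    - unfold mdiff; cbn [fst snd]. rewrite Rminus_diag, twrap_id by lra.
      rewrite norm2_x0, E. replace (3/4 - e - 3/4) with (- e) by ring. rewrite Rabs_Ropp, Rabs_right; lra.
    - destruct HYq as [HYq _]. cbn [fst snd] in HYq. lra. }
  assert (Hiter : forall k, Nat.iter k (fmap gam u) (xp, tp) =
     (fst (Nat.iter k (Psi gam u) (xp, tp)), frac (snd (Nat.iter k (Psi gam u) (xp, tp))))).
  { intros k. rewrite <- (iter_lift gam u Hper k xp tp), (frac_id tp Htp). reflexivity. }
  destruct Hfr as [Hn1 [HYn Hnot]].
  rewrite Hiter, (inY_char gam u Hper) in HYn.
  assert (Hnot' : forall k, (1 <= k)%nat -> (k < n)%nat ->
     ~ (3/4 <= fst (Nat.iter k (Psi gam u) (xp, tp)) <= 1 /\ fst (Nat.iter k (Psi gam u) (xp, tp)) <= M4 gam u (snd (Nat.iter k (Psi gam u) (xp, tp))))).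
  { intros k Hk1 Hk2 Hc. apply (Hnot k Hk1 Hk2). rewrite Hiter, (inY_char gam u Hper). exact Hc. }
  assert (Xpos : forall k, 0 < fst (Nat.iter k (Psi gam u) (xp, tp))).
  { intros k. induction k. simpl. lra.
    change (0 < f1 gam u (fst (Nat.iter k (Psi gam u) (xp, tp))) (snd (Nat.iter k (Psi gam u) (xp, tp)))).
    set (X := fst (Nat.iter k (Psi gam u) (xp, tp))) in *. set (T := snd (Nat.iter k (Psi gam u) (xp, tp))).
    unfold f1. destruct Rle_dec as [Hl|Hl].
    - unfold f1_left, rpow. destruct Rlt_dec; [|lra].
      pose proof (Rpower_pos X gam). pose proof (Hpos X T ltac:(lra)).
      apply Rmult_lt_0_compat; auto. nra.
    - lra. }
  assert (Xne : forall k, (k < n)%nat -> fst (Nat.iter k (Psi gam u) (xp, tp)) <> 3/4).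
  { intros k Hk E. destruct k. simpl in E. lra.
    apply (Hnot' (S k)); [lia|auto|]. rewrite E. split; [lra|].
    eapply Rle_trans; [|apply M4_ge]. unfold hh. pose proof (H15 (snd (Nat.iter (S k) (Psi gam u) (xp, tp)) / 4)). lra. }

  assert (Hux : forall X T, 0 < X < 3/4 -> Rabs (X * ux X T) <= 1/2).
  { intros X T HX. apply (Hsx X T); [lra|]. apply Hdx. }
  assert (HDstep : forall k, (k < n)%nat ->
     Dvec (Psi gam u) (fst (Nat.iter k (Psi gam u) (xp, tp))) (snd (Nat.iter k (Psi gam u) (xp, tp)))
       (A_of gam u ux ut (Nat.iter k (Psi gam u) (xp, tp)))).
  { intros k Hk. pose proof (Xpos k). pose proof (Xne k Hk).
    destruct (Nat.iter k (Psi gam u) (xp, tp)) as [X T]. cbn [fst snd] in *.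
    destruct (Rlt_le_dec X (3/4)).
    - apply Dvec_Psi_left; auto.
    - apply Dvec_Psi_right. lra. }
  pose proof (Dvec_iter (A_of gam u ux ut) (Psi gam u) xp tp n HDstep) as HDit.
  set (G := Gk (A_of gam u ux ut) (Psi gam u) (xp, tp) n).
  assert (HG : Dvec (Nat.iter n (Psi gam u)) xp tp G) by (apply HDit; lia).
  assert (HAexp : forall k, (k < n)%nat -> forall w,
     norm2 w <= norm2 (mapply (A_of gam u ux ut (Nat.iter k (Psi gam u) (xp, tp))) w)).
  { intros k Hk w. pose proof (Xpos k). pose proof (Xne k Hk).
    destruct (Nat.iter k (Psi gam u) (xp, tp)) as [X T]. cbn [fst snd] in *.
    destruct (Rlt_le_dec X (3/4)).
    - apply (Hexp (X, T)). unfold left_strip; cbn [fst snd]; lra.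
      apply hdw_of_Dvec. apply Dvec_flift_left; auto.
    - unfold A_of; cbn [fst snd]. destruct Rlt_dec; [lra|]. destruct w as [w1 w2]. unfold mapply; cbn [fst snd].
      replace (4 * w1 + 0 * w2) with (4 * w1) by ring. replace (0 * w1 + 4 * w2) with (4 * w2) by ring.
      rewrite norm2_scale, Rabs_right by lra. pose proof (sqrt_pos (fst (w1, w2) ^ 2 + snd (w1, w2) ^ 2)).
      unfold norm2 in *. lra. }
  assert (HA0 : A_of gam u ux ut (Nat.iter 0 (Psi gam u) (xp, tp)) = ((4, 0), (0, 4))).
  { unfold A_of; simpl. destruct Rlt_dec; [lra|reflexivity]. }
  assert (Gexp : forall k, (1 <= k <= n)%nat -> forall w,
     4 * norm2 w <= norm2 (mapply (Gk (A_of gam u ux ut) (Psi gam u) (xp, tp) k) w)).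
  { intros k. induction k; intros Hk w. lia.
    change (4 * norm2 w <= norm2 (mapply (matmul (A_of gam u ux ut (Nat.iter k (Psi gam u) (xp, tp)))
        (Gk (A_of gam u ux ut) (Psi gam u) (xp, tp) k)) w)).
    rewrite mapply_matmul. destruct k.
    - simpl Gk. rewrite mapply_I, HA0. destruct w as [w1 w2]. unfold mapply; cbn [fst snd].
      replace (4 * w1 + 0 * w2) with (4 * w1) by ring. replace (0 * w1 + 4 * w2) with (4 * w2) by ring.
      rewrite norm2_scale, Rabs_right by lra. lra.
    - eapply Rle_trans; [apply IHk; lia|]. apply HAexp. lia. }
  assert (Galpha : forall k, (k <= n)%nat ->
     fst (snd (Gk (A_of gam u ux ut) (Psi gam u) (xp, tp) k)) = 0 /\
     0 < fst (fst (Gk (A_of gam u ux ut) (Psi gam u) (xp, tp) k))).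
  { intros k. induction k; intros Hk. simpl. split; [reflexivity|lra].
    destruct (IHk ltac:(lia)) as [I1 I2]. simpl Gk.
    pose proof (Xpos k). pose proof (Xne k ltac:(lia)).
    revert I1 I2. generalize (Gk (A_of gam u ux ut) (Psi gam u) (xp, tp) k). intros Gm I1 I2.
    destruct (Nat.iter k (Psi gam u) (xp, tp)) as [X T]. cbn [fst snd] in *.
    unfold A_of, matmul; cbn [fst snd]. rewrite I1. destruct Rlt_dec; cbn [fst snd].
    - split; [ring|]. rewrite Rmult_0_r, Rplus_0_r. apply Rmult_lt_0_compat; auto.
      apply a_of_pos; auto. apply Hpos; lra.
    - split; [ring|]. lra. }

  set (al := fst (fst G)). set (be := snd (fst G)).
  assert (Hal : 0 < al) by (apply (Galpha n); lia).
  set (Lh := 3/4 * Rabs (rpow (3/4) gam) * (1/2)).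
  assert (HLh : 0 <= Lh) by (unfold Lh; pose proof (Rabs_pos (rpow (3/4) gam)); lra).
  assert (HM4 : forall T T', Rabs (M4 gam u T' - M4 gam u T) <= Lh * Rabs (T' - T)).
  { apply M4_lip; auto. apply (hh_lip gam u ut (1/2) Hdt). intros c. apply (Hst (3/4) c); [lra|]. apply Hdt. }
  assert (Xcont : forall k s d eta, (k <= n)%nat -> 0 < eta ->
     Ev (fun h => Rabs (fst (Nat.iter k (Psi gam u) (xp + h * s, tp + h * d)) - fst (Nat.iter k (Psi gam u) (xp, tp))) < eta)).
  { intros k s0 d eta Hk He. destruct (HDit k Hk) as [H1 _]. exact (ray_cont _ _ _ _ _ s0 d H1 eta He). }
  assert (Xfirst : forall s d eps, 0 < eps ->
     Ev (fun h => Rabs (fst (Nat.iter n (Psi gam u) (xp + h * s, tp + h * d)) - fst (Nat.iter n (Psi gam u) (xp, tp))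
        - h * (al * s + be * d)) <= eps * h)).
  { intros s0 d eps He. destruct HG as [H1 _]. exact (ray_first _ _ _ _ _ s0 d H1 eps He). }
  assert (Tdiff : forall k s d h, snd (Nat.iter k (Psi gam u) (xp + h * s, tp + h * d)) - snd (Nat.iter k (Psi gam u) (xp, tp))
     = 4 ^ k * (h * d)).
  { intros. rewrite !snd_iter. ring. }
  assert (HM4d : forall k s d h, 0 < h ->
     Rabs (M4 gam u (snd (Nat.iter k (Psi gam u) (xp + h * s, tp + h * d))) - M4 gam u (snd (Nat.iter k (Psi gam u) (xp, tp))))
       <= Lh * 4 ^ k * Rabs d * h).
  { intros k s0 d h Hh. eapply Rle_trans; [apply HM4|]. rewrite Tdiff, !Rabs_mult, (Rabs_right h) by lra.
    rewrite (Rabs_right (4 ^ k)) by (left; apply pow_lt; lra). lra. }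
  assert (Hi : forall s d, Ev (fun h => forall k, (k < n)%nat -> (1 <= k)%nat ->
     ~ inY gam u (Nat.iter k (fmap gam u) (xp + h * s, frac (tp + h * d))))).
  { intros s0 d. apply Ev_forall. intros k Hk. destruct k as [|k'].
    { exists 1. split; [lra|]. intros. lia. }
    set (k := S k') in *.
    pose proof (Hnot' k ltac:(lia) Hk) as Hn.
    set (X := fst (Nat.iter k (Psi gam u) (xp, tp))) in *. set (T := snd (Nat.iter k (Psi gam u) (xp, tp))) in *.
    assert (Hcase : X < 3/4 \/ 1 < X \/ M4 gam u T < X).
    { destruct (Rlt_le_dec X (3/4)); auto. destruct (Rlt_le_dec 1 X); auto. destruct (Rlt_le_dec (M4 gam u T) X); auto.
      exfalso. apply Hn. lra. }
    assert (Goal : forall h, 0 < h -> ~ (3/4 <= fst (Nat.iter k (Psi gam u) (xp + h * s0, tp + h * d)) <= 1 /\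
         fst (Nat.iter k (Psi gam u) (xp + h * s0, tp + h * d)) <= M4 gam u (snd (Nat.iter k (Psi gam u) (xp + h * s0, tp + h * d))))
       -> forall _ : (1 <= k)%nat, ~ inY gam u (Nat.iter k (fmap gam u) (xp + h * s0, frac (tp + h * d)))).
    { intros h Hh Hc _. rewrite (iter_lift gam u Hper), (inY_char gam u Hper). exact Hc. }
    destruct Hcase as [C1|[C1|C1]].
    - eapply Ev_mono. apply (Xcont k s0 d (3/4 - X)); [lia|lra].
      intros h Hh H1. apply Goal; auto. apply Rabs_def2 in H1. fold X in H1. lra.
    - eapply Ev_mono. apply (Xcont k s0 d (X - 1)); [lia|lra].
      intros h Hh H1. apply Goal; auto. apply Rabs_def2 in H1. fold X in H1. lra.
    - set (eta := (X - M4 gam u T) / 2).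
      assert (Heta : 0 < eta) by (unfold eta; lra).
      assert (Hc : 0 < Lh * 4 ^ k * Rabs d + 1).
      { pose proof (pow_lt 4 k ltac:(lra)). pose proof (Rabs_pos d).
        assert (0 <= Lh * 4 ^ k * Rabs d) by (apply Rmult_le_pos; [apply Rmult_le_pos|]; lra). lra. }
      eapply Ev_mono. apply Ev_and. apply (Xcont k s0 d eta); [lia|lra].
      apply (Ev_lt (eta / (Lh * 4 ^ k * Rabs d + 1))). apply Rdiv_lt_0_compat; lra.
      intros h Hh [H1 H2]. apply Goal; auto. apply Rabs_def2 in H1. fold X in H1.
      pose proof (HM4d k s0 d h Hh) as H3. fold T in H3. apply Rabs_le_between in H3.
      pose proof (lt_div_mul h _ _ Hc H2).
      assert (Lh * 4 ^ k * Rabs d * h < eta).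
      { assert (0 <= Lh * 4 ^ k * Rabs d) by (apply Rmult_le_pos; [apply Rmult_le_pos|]; [lra| left; apply pow_lt; lra| apply Rabs_pos]).
        nra. }
      unfold eta in *. lra. }

  set (D := Rabs be + Lh * 4 ^ n + 1).
  assert (HD : 0 < D).
  { unfold D. pose proof (Rabs_pos be). pose proof (pow_lt 4 n ltac:(lra)).
    assert (0 <= Lh * 4 ^ n) by (apply Rmult_le_pos; lra). lra. }
  set (d1 := al / (4 * D)).
  assert (Hd1 : 0 < d1) by (unfold d1; apply Rdiv_lt_0_compat; lra).
  assert (Hd1D : d1 * D = al / 4) by (unfold d1; field; lra).
  assert (Hbd : forall d, Rabs d <= d1 -> Rabs (be * d) <= al / 4).
  { intros d Hd. rewrite Rabs_mult. pose proof (Rabs_pos be). pose proof (Rabs_pos d).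
    assert (Rabs be <= D) by (unfold D; pose proof (pow_lt 4 n ltac:(lra));
      assert (0 <= Lh * 4 ^ n) by (apply Rmult_le_pos; lra); lra). nra. }
  assert (HLd : forall d, Rabs d <= d1 -> Lh * 4 ^ n * Rabs d <= al / 4).
  { intros d Hd. pose proof (Rabs_pos d). pose proof (Rabs_pos be).
    assert (0 <= Lh * 4 ^ n) by (pose proof (pow_lt 4 n ltac:(lra)); apply Rmult_le_pos; lra).
    assert (Lh * 4 ^ n <= D) by (unfold D; lra). nra. }
  set (Xn := fst (Nat.iter n (Psi gam u) (xp, tp))) in *.
  set (Tn := snd (Nat.iter n (Psi gam u) (xp, tp))) in *.
  assert (Hfin : forall s d, (forall h, 0 < h -> inM (xp + h * s, frac (tp + h * d)) -> True) ->
     Ev (fun h => inM (xp + h * s, frac (tp + h * d))) ->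
     Ev (fun h => 3/4 <= fst (Nat.iter n (Psi gam u) (xp + h * s, tp + h * d)) <= 1 /\
        fst (Nat.iter n (Psi gam u) (xp + h * s, tp + h * d)) <= M4 gam u (snd (Nat.iter n (Psi gam u) (xp + h * s, tp + h * d)))) ->
     Ev (fun h => inM (xp + h * s, frac (tp + h * d)) /\ first_return gam u (xp + h * s, frac (tp + h * d)) n)).
  { intros s0 d _ E1 E2. eapply Ev_mono. apply (Ev_and _ _ E1 (Ev_and _ _ E2 (Hi s0 d))).
    intros h Hh [H1 [H2 H3]]. split; auto. split; [lia|]. split.
    - rewrite (iter_lift gam u Hper), (inY_char gam u Hper). exact H2.
    - intros k Hk1 Hk2. apply H3; auto. }
  assert (Claim : exists s, (s = 1 \/ s = -1) /\ forall d, Rabs d <= d1 ->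
     Ev (fun h => inM (xp + h * s, frac (tp + h * d)) /\ first_return gam u (xp + h * s, frac (tp + h * d)) n)).
  { destruct (Req_dec Xn (3/4)) as [EA|EB].
    - exists 1. split; auto. intros d Hd. apply Hfin; auto.
      + assert (Hx1 : xp < 1).
        { destruct (Req_dec xp 1) as [E|E]; [|lra]. exfalso. unfold Xn in EA. rewrite E, fst_iter_1 in EA. lra. }
        eapply Ev_mono. apply (Ev_lt (1 - xp)); lra. intros h Hh H1. unfold inM; cbn [fst snd].
        pose proof (frac_range (tp + h * d)). lra.
      + eapply Ev_mono. apply Ev_and. apply (Xfirst 1 d (al / 4)); lra. apply (Xcont n 1 d (1/8)); [lia|lra].
        intros h Hh [H1 H2]. fold Xn in H1, H2. apply Rabs_le_between in H1. apply Rabs_def2 in H2.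
        pose proof (Hbd d Hd) as H3. apply Rabs_le_between in H3.
        assert (0 <= h * (al * 1 + be * d) - al / 4 * h) by nra.
        split; [lra|]. eapply Rle_trans; [|apply M4_ge]. unfold hh.
        match goal with |- _ <= f1_left gam u (3/4) ?t => pose proof (H15 t) end. lra.
    - assert (EB' : 3/4 < Xn) by lra.
      exists (-1). split; auto. intros d Hd. apply Hfin; auto.
      + eapply Ev_mono. apply (Ev_lt (1/4)); lra. intros h Hh H1. unfold inM; cbn [fst snd].
        pose proof (frac_range (tp + h * d)). lra.
      + eapply Ev_mono. apply Ev_and. apply (Xfirst (-1) d (al / 4)); lra. apply (Xcont n (-1) d (Xn - 3/4)); [lia|lra].
        intros h Hh [H1 H2]. fold Xn in H1, H2. apply Rabs_le_between in H1. apply Rabs_def2 in H2.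
        pose proof (Hbd d Hd) as H3. apply Rabs_le_between in H3.
        pose proof (HLd d Hd) as H4.
        pose proof (HM4d n (-1) d h Hh) as H5. fold Tn in H5. apply Rabs_le_between in H5.
        pose proof (M4_le1 gam u Hle1 (snd (Nat.iter n (Psi gam u) (xp + h * -1, tp + h * d)))).
        assert (Lh * 4 ^ n * Rabs d * h <= al / 4 * h) by (apply Rmult_le_compat_r; lra).
        assert (h * (al * -1 + be * d) <= - (3/4) * al * h) by nra.
        lra. }
  destruct Claim as [s [Hs Hray]].
  pose proof (ray_eq gam u L n xp tp G s 0 Hper Htp HFd HG (Hray 0 ltac:(rewrite Rabs_R0; lra))) as R0.
  pose proof (ray_eq gam u L n xp tp G s d1 Hper Htp HFd HG (Hray d1 ltac:(rewrite Rabs_right; lra))) as R1.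
  rewrite (mat_eq_dirs L G s d1 ltac:(lra) ltac:(lra) R0 R1 v).
  apply Gexp. lia.
Qed.
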